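(* Let $U\subset\mathbb{R}^2$, and let measurements be modeled by a Gaussian process with squared-exponential kernel $k(x,x')=\sigma_0^2\exp\!\left(-\frac{\|x-x'\|^2}{2l^2}\right)$ ($\sigma_0^2>0$, $l>0$) and i.i.d. additive Gaussian noise of variance $\omega^2>0$. Let $0<\Delta<\sigma_0^2$, let $x\in U$ be a test location and let $X$ be a finite collection of measurement locations (repetitions allowed). If there is a measurement location $x_i\in X$ at distance $r$ from $x$ at which $n_{\text{suff}}\ge 1$ measurements are taken, with $$r\le l\sqrt{-\log\left(\left(1+\frac{\omega^2}{n_{\text{suff}}\sigma_0^2}\right)\left(1-\frac{\Delta}{\sigma_0^2}\right)\right)},$$ then $MSE(x)\le\Delta$.
   Context: For measurement locations $X=(x_1,\dots,x_n)$ (a location repeated $m$ times means $m$ measurements there), the GP posterior variance at $x$ is $\hat\sigma^2_{x|X}=k(x,x)-\mathbf{k}(x,X)\left[\mathbf{K}(X,X)+\omega^2\mathbf{I}\right]^{-1}\mathbf{k}(X,x)$, where $\mathbf{K}(X,X)$ has entries $k(x_p,x_q)$ and $\mathbf{k}(x,X)=(k(x,x_1),\dots,k(x,x_n))$. The MSE of the GP prediction at $x$ is $MSE(x)=\hat\sigma^2_{x|X}$. *)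

(* Defs.v *)
From mathcomp Require Import all_boot all_order all_algebra.
From mathcomp Require Import all_classical all_reals all_analysis.
Set Implicit Arguments. Unset Strict Implicit. Unset Printing Implicit Defensive.
Import Order.TTheory GRing.Theory Num.Theory.
Local Open Scope ring_scope.

Definition sqdist {R : realType} (x y : 'rV[R]_2) : R :=
  \sum_(i < 2) (x ord0 i - y ord0 i) ^+ 2.

Definition dist2 {R : realType} (x y : 'rV[R]_2) : R := Num.sqrt (sqdist x y).

Definition se_kernel {R : realType} (s0sq l : R) (x y : 'rV[R]_2) : R :=
  s0sq * expR (- (dist2 x y ^+ 2) / (2 * l ^+ 2)).

(* GP posterior variance at x given measurement locations X : 'I_n -> R^2
   (repetitions allowed), noise variance w2:
   k(x,x) - k(x,X) [K(X,X) + w2 I]^{-1} k(X,x). *)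
Definition post_var {R : realType} (k : 'rV[R]_2 -> 'rV[R]_2 -> R) (w2 : R)
    (n : nat) (X : 'I_n -> 'rV[R]_2) (x : 'rV[R]_2) : R :=
  k x x -
  ((\row_(p < n) k x (X p)) *m
     invmx ((\matrix_(p < n, q < n) k (X p) (X q)) + w2%:M) *m
     (\col_(q < n) k (X q) x)) ord0 ord0.

Definition MSE {R : realType} (k : 'rV[R]_2 -> 'rV[R]_2 -> R) (w2 : R)
    (n : nat) (X : 'I_n -> 'rV[R]_2) (x : 'rV[R]_2) : R :=
  post_var k w2 X x.

(* Main.v *)
Require Import Defs.
From mathcomp Require Import all_boot all_order all_algebra.
From mathcomp Require Import all_classical all_reals all_analysis.
From mathcomp Require Import ring lra.
Import Order.TTheory GRing.Theory Num.Theory.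
Local Open Scope classical_set_scope.
Local Open Scope ring_scope.

Section PSD.
Variable R : realType.
Variable n : nat.
Implicit Types b : 'I_n -> R.

Definition form b (G : 'I_n -> 'I_n -> R) := \sum_p \sum_q b p * b q * G p q.

Lemma form_sum b m (G : 'I_m -> 'I_n -> 'I_n -> R) :
  form b (fun p q => \sum_j G j p q) = \sum_j form b (G j).
Proof.
rewrite /form.
under eq_bigr do under eq_bigr do rewrite mulr_sumr.
under eq_bigr do rewrite exchange_big.
by rewrite exchange_big.
Qed.

Lemma form_scale b c G : form b (fun p q => c * G p q) = c * form b G.
Proof.
rewrite /form mulr_sumr; apply: eq_bigr => p _; rewrite mulr_sumr.
by apply: eq_bigr => q _; rewrite mulrCA.
Qed.

Lemma form_rank1 b f : form b (fun p q => f p * f q) = (\sum_p b p * f p) ^+ 2.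
Proof.
rewrite /form expr2 mulr_suml; apply: eq_bigr => p _; rewrite mulr_sumr.
by apply: eq_bigr => q _; ring.
Qed.

Lemma form_rank1_ge0 b f : 0 <= form b (fun p q => f p * f q).
Proof. by rewrite form_rank1 sqr_ge0. Qed.

Lemma form_pow_ge0 b (A B : 'I_n -> R) k :
  0 <= form b (fun p q => (A p * A q + B p * B q) ^+ k).
Proof.
have -> : (fun p q => (A p * A q + B p * B q) ^+ k) =
  (fun p q => \sum_(j < k.+1) ('C(k, j))%:R *
      ((A p ^+ (k - j) * B p ^+ j) * (A q ^+ (k - j) * B q ^+ j))).
  apply/funext => p; apply/funext => q; rewrite exprDn.
  apply: eq_bigr => j _; rewrite -mulr_natl !exprMn; ring.
rewrite form_sum; apply: sumr_ge0 => j _.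
by rewrite form_scale mulr_ge0 ?ler0n ?form_rank1_ge0.
Qed.

Lemma form_exp_ge0 b (A B : 'I_n -> R) :
  0 <= form b (fun p q => expR (A p * A q + B p * B q)).
Proof.
set s := fun p q => A p * A q + B p * B q.
have cv : (fun N => form b (fun p q => series (exp_coeff (s p q)) N)) @ \oo -->
   form b (fun p q => expR (s p q)).
  apply: cvg_big => //; first exact: add_continuous.
  move=> p _; apply: cvg_big => //; first exact: add_continuous.
  move=> q _; apply: cvgMr.
exact: is_cvg_series_exp_coeff.
apply: (cvgr_to_ge cv); apply: nearW => N.
rewrite /form /series /=.
suff -> : \sum_(p < n) \sum_(q < n) b p * b q * \sum_(0 <= k < N) exp_coeff (s p q) k
   = form b (fun p q => \sum_(k < N) (k`!%:R)^-1 * s p q ^+ k).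
  rewrite form_sum; apply: sumr_ge0 => k _.
  by rewrite form_scale mulr_ge0 ?invr_ge0 ?ler0n ?form_pow_ge0.
rewrite /form; apply: eq_bigr => p _; apply: eq_bigr => q _; rewrite big_mkord.
by congr (_ * _); apply: eq_bigr => k _; rewrite /exp_coeff /= mulrC.
Qed.

Lemma form_diag b g G : form b (fun p q => g p * g q * G p q) = form (fun p => b p * g p) G.
Proof. by rewrite /form; apply: eq_bigr => p _; apply: eq_bigr => q _; ring. Qed.

Lemma sqdist_ge0 (y z : 'rV[R]_2) : 0 <= sqdist y z.
Proof. by apply: sumr_ge0 => i _; rewrite sqr_ge0. Qed.

Definition i1 : 'I_2 := lift ord0 ord0.

Lemma se_key (s0 l : R) (y z : 'rV[R]_2) : l != 0 ->
  se_kernel s0 l y z = s0 * (expR (- (y ord0 ord0 ^+ 2 + y ord0 i1 ^+ 2) / (2 * l ^+ 2)) *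
    expR (- (z ord0 ord0 ^+ 2 + z ord0 i1 ^+ 2) / (2 * l ^+ 2)) *
    expR (y ord0 ord0 / l * (z ord0 ord0 / l) + y ord0 i1 / l * (z ord0 i1 / l))).
Proof.
move=> l0; rewrite /se_kernel /dist2 sqr_sqrtr ?sqdist_ge0 // -!expRD.
rewrite /sqdist !big_ord_recl big_ord0 addr0.
congr (_ * expR _).
rewrite /i1 /=. by field.
Qed.

Lemma se_psd (s0 l : R) (Y : 'I_n -> 'rV[R]_2) b : 0 <= s0 -> l != 0 ->
  0 <= form b (fun p q => se_kernel s0 l (Y p) (Y q)).
Proof.
move=> s0p l0.
rewrite (_ : (fun p q => se_kernel s0 l (Y p) (Y q)) = fun p q => s0 *
   (expR (- (Y p ord0 ord0 ^+ 2 + Y p ord0 i1 ^+ 2) / (2 * l ^+ 2)) *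
    expR (- (Y q ord0 ord0 ^+ 2 + Y q ord0 i1 ^+ 2) / (2 * l ^+ 2)) *
    expR (Y p ord0 ord0 / l * (Y q ord0 ord0 / l) + Y p ord0 i1 / l * (Y q ord0 i1 / l)))); last first.
  by apply/funext => p; apply/funext => q; rewrite se_key.
rewrite form_scale form_diag mulr_ge0 //.
exact: (form_exp_ge0 _ (fun p => Y p ord0 ord0 / l) (fun p => Y p ord0 i1 / l)).
Qed.

Lemma quad_form (G : 'M[R]_n) (v : 'rV_n) :
  (v *m G *m v^T) 0 0 = form (fun p => v 0 p) (fun p q => G p q).
Proof.
rewrite /form mxE exchange_big /=; apply: eq_bigr => p _.
rewrite !mxE mulr_suml; apply: eq_bigr => q _; ring.
Qed.
End PSD.
Arguments form {R n}.
Section Mat.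
Variables (R : realType) (n : nat) (G : 'M[R]_n) (w2 : R).
Hypothesis Gsym : G^T = G.
Hypothesis Gpsd : forall v : 'rV_n, 0 <= (v *m G *m v^T) 0 0.
Hypothesis w2pos : 0 < w2.

Lemma quadM (v : 'rV_n) : (v *m (G + w2%:M) *m v^T) 0 0 =
   (v *m G *m v^T) 0 0 + w2 * \sum_p v 0 p ^+ 2.
Proof.
rewrite mulmxDr mul_mx_scalar mulmxDl mxE; congr (_ + _).
rewrite -scalemxAl mxE; congr (_ * _); rewrite mxE.
by apply: eq_bigr => p _; rewrite mxE expr2.
Qed.

Lemma M_unit : (G + w2%:M) \in unitmx.
Proof.
rewrite unitmxE unitfE; apply/negP => /det0P [v vn0 vM].
have := quadM v; rewrite vM mul0mx mxE => /esym /eqP.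
rewrite paddr_eq0 ?Gpsd ?mulr_ge0 ?sumr_ge0 ?ltW // => [/andP[_]|p _]; last exact: sqr_ge0.
rewrite mulf_eq0 gt_eqF //= psumr_eq0 => [/allP H|p _]; last exact: sqr_ge0.
apply/negP: vn0; rewrite negbK; apply/eqP/matrixP => i j.
rewrite (ord1 i) mxE; apply/eqP; rewrite -sqrf_eq0.
by apply: H; rewrite mem_index_enum.
Qed.

Lemma M_sym : (G + w2%:M)^T = G + w2%:M.
Proof. by rewrite raddfD /= tr_scalar_mx Gsym. Qed.

Lemma main_ineq (kr a : 'rV_n) :
  2 * (a *m kr^T) 0 0 - (a *m (G + w2%:M) *m a^T) 0 0 <=
  (kr *m invmx (G + w2%:M) *m kr^T) 0 0.
Proof.
set M := G + w2%:M.
have uM : M \in unitmx := M_unit.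
have sM : M^T = M := M_sym.
set c := kr *m invmx M.
have := quadM (a - c); rewrite -/M => E.
have : 0 <= ((a - c) *m M *m (a - c)^T) 0 0.
  rewrite E addr_ge0 ?Gpsd // mulr_ge0 //; first exact: ltW.
  by apply: sumr_ge0 => p _; exact: sqr_ge0.
have cM : c *m M = kr by rewrite /c mulmxKV.
have cT : c^T = invmx M *m kr^T by rewrite /c trmx_mul trmx_inv sM.
rewrite mulmxBl cM linearB /= !mulmxBr !mulmxBl cT.
rewrite !mulmxA (mulmxK uM) -/c.
have sub00 : forall A B : 'M[R]_1, (A - B) 0 0 = A 0 0 - B 0 0 by move=> A B; rewrite !mxE.
rewrite !sub00.
have -> : (kr *m a^T) 0 0 = (a *m kr^T) 0 0.
  by rewrite -[kr](trmxK kr) -trmx_mul mxE trmxK.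
lra.
Qed.
End Mat.
Local Close Scope classical_set_scope.

Theorem lemma2 (R : realType) (U : set 'rV[R]_2) (s0sq l w2 Delta : R)
    (n : nat) (X : 'I_n -> 'rV[R]_2) (x : 'rV[R]_2) (i : 'I_n)
    (nsuff : nat) (r : R) :
  0 < s0sq -> 0 < l -> 0 < w2 ->
  0 < Delta -> Delta < s0sq ->
  U x -> (forall j, U (X j)) ->
  dist2 x (X i) = r ->
  (1 <= nsuff)%N ->
  #|[set j : 'I_n | X j == X i]| = nsuff ->
  (1 + w2 / (nsuff%:R * s0sq)) * (1 - Delta / s0sq) <= 1 ->
  r <= l * Num.sqrt (- ln ((1 + w2 / (nsuff%:R * s0sq)) * (1 - Delta / s0sq))) ->
  MSE (se_kernel s0sq l) w2 X x <= Delta.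
Proof.
move=> s0p lp w2p Dp Ds Ux UX dr m1 card P1 rle.
set k := se_kernel s0sq l.
have ksym : forall y z, k y z = k z y.
  move=> y z; have sq : sqdist y z = sqdist z y.
    by apply: eq_bigr => j _; rewrite -sqrrN opprB.
  by rewrite /k /se_kernel /dist2 sq.
have kdiag : forall y, k y y = s0sq.
  move=> y; rewrite /k /se_kernel /dist2 /sqdist big1 => [|j _]; last by rewrite subrr expr0n.
  by rewrite sqrtr0 expr0n /= oppr0 mul0r expR0 mulr1.
rewrite /MSE /post_var.
set G := \matrix_(p < n, q < n) k (X p) (X q).
have Gsym : G^T = G by apply/matrixP => p q; rewrite !mxE ksym.
have Gpsd : forall v : 'rV_n, 0 <= (v *m G *m v^T) 0 0.
  move=> v; rewrite quad_form.
  rewrite (_ : (fun p q => G p q) = fun p q => k (X p) (X q)); last first.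
    by apply/funext => p; apply/funext => q; rewrite mxE.
  by apply: se_psd; [exact: ltW | rewrite gt_eqF].
have -> : \col_q k (X q) x = (\row_p k x (X p))^T by apply/matrixP => p q; rewrite !mxE ksym.
set kr := \row_p k x (X p).
set m : R := nsuff%:R.
have mp : 0 < m by rewrite ltr0n.
set k0 := k x (X i).
set D := m * s0sq + w2.
have D0 : 0 < D by rewrite addr_gt0 // mulr_gt0.
set alpha := k0 / D.
set a := \row_j (if X j == X i then alpha else 0 : R).
have H := @main_ineq R n G w2 Gsym Gpsd w2p kr a.
have sum_ind : forall c : R, \sum_j (if X j == X i then c else 0) = m * c.
  move=> c; rewrite -big_mkcond /=.
  have -> : \sum_(j | X j == X i) c = \sum_(j in [set j | X j == X i]%SET) c.
    by apply: eq_bigl => j; rewrite inE.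
  by rewrite sumr_const card mulr_natl.
have E1 : (a *m kr^T) 0 0 = m * (alpha * k0).
  rewrite mxE -sum_ind; apply: eq_bigr => j _; rewrite !mxE.
  by case: eqP => [->|_]; rewrite ?mul0r.
have E2 : (a *m (G + w2%:M) *m a^T) 0 0 = alpha ^+ 2 * m * D.
  rewrite quadM // quad_form.
  have -> : form (fun p => a 0 p) (fun p q => G p q) =
            form (fun p => a 0 p) (fun p q => s0sq * (1 * 1)).
    apply: eq_bigr => p _; apply: eq_bigr => q _; rewrite !mxE.
    case: (eqVneq (X p) (X i)) => [ep|]; last by rewrite !mul0r.
    case: (eqVneq (X q) (X i)) => [eq|]; last by rewrite mulr0 !mul0r.
    by rewrite ep eq kdiag !mulr1.
  rewrite form_scale form_rank1.
  have -> : \sum_p a 0 p * 1 = m * alpha.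
    rewrite -sum_ind; apply: eq_bigr => j _; rewrite mxE mulr1; by case: eqP.
  have -> : \sum_p a 0 p ^+ 2 = m * alpha ^+ 2.
    rewrite -sum_ind; apply: eq_bigr => j _; rewrite mxE; case: eqP => // _; by rewrite expr0n.
  rewrite /D; ring.
rewrite E1 E2 in H.
set E := expR (- (r ^+ 2) / (2 * l ^+ 2)).
have k0E : k0 = s0sq * E by rewrite /k0 /k /se_kernel dr.
set q := m * s0sq ^+ 2 / D.
have qp : 0 <= q.
    apply: mulr_ge0; last by rewrite invr_ge0 ltW.
    by apply: mulr_ge0; [exact: ltW | exact: sqr_ge0].
have E3 : 2 * (m * (alpha * k0)) - alpha ^+ 2 * m * D = q * E ^+ 2.
  rewrite /alpha /q k0E; field; exact: lt0r_neq0 D0.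
rewrite E3 in H; rewrite kdiag.
set P := (1 + w2 / (nsuff%:R * s0sq)) * (1 - Delta / s0sq).
have Pp : 0 < P.
  rewrite /P mulr_gt0 //; first by rewrite addr_gt0 // divr_gt0 // mulr_gt0.
  by rewrite subr_gt0 ltr_pdivrMr // mul1r.
have qP : q * P = s0sq - Delta.
  rewrite /q /P /D -/m; field; rewrite ?lt0r_neq0 //.
have EP : P <= E ^+ 2.
  have -> : E ^+ 2 = expR (- (r ^+ 2 / l ^+ 2)).
    by rewrite expr2 -expRD; congr expR; field; rewrite lt0r_neq0.
  rewrite -[P in P <= _]lnK ?posrE // ler_expR lerNr ler_pdivrMr ?exprn_gt0 //.
  have r0 : 0 <= r by rewrite -dr sqrtr_ge0.
  have lnP : 0 <= - ln P by rewrite oppr_ge0 ln_le0.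
  have := sqr_sqrtr lnP.
  set S := Num.sqrt (- ln P) => hS.
  have rle' : r <= l * S := rle.
  have : r ^+ 2 <= (l * S) ^+ 2 by nra.
  by rewrite exprMn hS mulrC.
have : q * P <= q * E ^+ 2 by rewrite ler_wpM2l.
lra.
Qed.
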